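(* Let $G$ be a finite group of order $mn$ and let $H$ be a (not necessarily normal) subgroup of $G$ of order $n$. Suppose $T=\{D_1,\dots,D_s\}$ is a family of pairwise disjoint $k$-subsets of $G$ such that (i) each $D_i$ is an $(m,n,k,\lambda)$-relative difference set in $G$ relative to $H$, and (ii) $T$ partitions $G\setminus H$. Then $T$ is an $(mn,s,k,s\lambda,0)$-DPDF and an $(mn,s,k,mn-2n-s\lambda,mn-n)$-EPDF in $G$.
   Context: Groups are written multiplicatively with identity $e$; $G^*=G\setminus\{e\}$. For $D\subseteq G$, $\Delta(D)$ is the multiset $\{xy^{-1}: x,y\in D, x\ne y\}$; for $D_1,D_2\subseteq G$, $\Delta(D_1,D_2)$ is the multiset $\{xy^{-1}:x\in D_1,y\in D_2\}$. If $|G|=mn$ and $H$ is a subgroup of order $n$ (here not required to be normal), a $k$-subset $R$ is an $(m,n,k,\lambda)$-relative difference set relative to $H$ if $\Delta(R)$ contains each element of $G\setminus H$ exactly $\lambda$ times and no element of $H\setminus\{e\}$. For a family $A=\{A_1,\dots,A_s\}$ of pairwise disjoint subsets, ${\rm Int}(A)=\bigcup_i\Delta(A_i)$ and ${\rm Ext}(A)=\bigcup_{i\ne j}\Delta(A_i,A_j)$ (multiset unions). For $|G|=v$, a $(v,s,k,\lambda,\mu)$-DPDF is a family of $s$ pairwise disjoint $k$-subsets of $G^*$ with union $S$ such that ${\rm Int}(A)$ contains each element of $S$ exactly $\lambda$ times and each element of $G\setminus(S\cup\{e\})$ exactly $\mu$ times; a $(v,s,k,\lambda,\mu)$-EPDF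 is defined the same way using ${\rm Ext}(A)$. A family partitions a set $X$ if its members are pairwise disjoint with union $X$. *)

(* Defs.v *)
From mathcomp Require Import all_boot all_algebra all_fingroup.
Set Implicit Arguments. Unset Strict Implicit. Unset Printing Implicit Defensive.
Import GRing.Theory.

Local Open Scope group_scope.

Section Defs.
Variable gT : finGroupType.

(* multiplicity of g in Delta(A) = { x y^-1 : x, y in A, x <> y } *)
Definition delta_count (A : {set gT}) (g : gT) : nat :=
  #|[set p in setX A A | (p.1 != p.2) && (p.1 * p.2^-1 == g)]|.

(* multiplicity of g in Delta(A,B) = { x y^-1 : x in A, y in B } *)
Definition delta2_count (A B : {set gT}) (g : gT) : nat :=
  #|[set p in setX A B | p.1 * p.2^-1 == g]|.

Definition int_count (s : nat) (D : 'I_s -> {set gT}) (g : gT) : nat :=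
  \sum_(i < s) delta_count (D i) g.

Definition ext_count (s : nat) (D : 'I_s -> {set gT}) (g : gT) : nat :=
  \sum_(i < s) \sum_(j < s | i != j) delta2_count (D i) (D j) g.

Definition pairwise_disjoint (s : nat) (D : 'I_s -> {set gT}) : Prop :=
  forall i j : 'I_s, i != j -> [disjoint D i & D j].

Definition is_RDS (G H : {set gT}) (m n k lam : nat) (R : {set gT}) : Prop :=
  [/\ #|G| = (m * n)%N, #|H| = n, H \subset G, R \subset G & #|R| = k] /\
  (forall g, g \in G :\: H -> delta_count R g = lam) /\
  (forall g, g \in H :\ 1 -> delta_count R g = 0%N).

Definition is_PDF_with (count : gT -> nat) (G : {set gT}) (v s k : nat)
    (lam mu : int) (D : 'I_s -> {set gT}) : Prop :=
  let S := \bigcup_(i < s) D i in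
  [/\ #|G| = v,
      (forall i, D i \subset G :\ 1),
      (forall i, #|D i| = k)
    & pairwise_disjoint D] /\
  (forall g, g \in S -> Posz (count g) = lam) /\
  (forall g, g \in G :\: (S :|: [set 1]) -> Posz (count g) = mu).

Definition is_DPDF (G : {set gT}) (v s k : nat) (lam mu : int)
    (D : 'I_s -> {set gT}) : Prop := is_PDF_with (int_count D) G v k lam mu D.

Definition is_EPDF (G : {set gT}) (v s k : nat) (lam mu : int)
    (D : 'I_s -> {set gT}) : Prop := is_PDF_with (ext_count D) G v k lam mu D.

End Defs.

(* Main.v *)
Require Import Defs.
From mathcomp Require Import all_boot all_algebra all_fingroup.
From mathcomp Require Import zify.

Section Helpers.
Variable gT : finGroupType.

Lemma d2E (A B : {set gT}) g :
  delta2_count A B g = \sum_(y : gT) ((y \in B) * ((g * y)%g \in A))%N.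
Proof.
rewrite /delta2_count.
have -> : [set p in setX A B | (p.1 * p.2^-1)%g == g] =
  (fun y => ((g * y)%g, y)) @: [set y | (y \in B) && ((g * y)%g \in A)].
  apply/setP => [[a b]]; rewrite !inE /=; apply/idP/imsetP.
    case/andP=> /andP [ha hb] /eqP e; exists b; last by rewrite -e mulgKV.
    by rewrite inE hb -e mulgKV ha.
  case=> y; rewrite inE => /andP [hy hgy] [-> ->].
  by rewrite hgy hy mulgK eqxx.
rewrite card_imset; last by move=> x y [_ ->].
rewrite -sum1_card big_mkcond /=; apply: eq_bigr => y _.
by rewrite inE mulnb; case: (_ && _).
Qed.

Lemma dE (A : {set gT}) g :
  delta2_count A A g = (delta_count A g + (g == 1%g) * #|A|)%N.
Proof.
rewrite /delta_count /delta2_count; case: eqP => [->|ng].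
  rewrite mul1n.
  have -> : [set p in setX A A | (p.1 != p.2) && ((p.1 * p.2^-1)%g == 1%g)] = set0.
    apply/setP => [[a b]]; rewrite !inE /= -eq_mulgV1.
    by case: (a == b); rewrite ?andbF ?andbT.
  rewrite cards0 add0n.
  have -> : [set p in setX A A | (p.1 * p.2^-1)%g == 1%g] = (fun y => (y, y)) @: A.
    apply/setP => [[a b]]; rewrite !inE /= -eq_mulgV1; apply/idP/imsetP.
      by case/andP => /andP [_ hb] /eqP ->; exists b.
    by case=> y hy [-> ->]; rewrite hy eqxx.
  by rewrite card_imset // => x y [].
rewrite mul0n addn0; apply: eq_card => -[a b]; rewrite !inE /=.
case e: (a * b^-1 == g)%g; rewrite ?andbF ?andbT //.
move/eqP: e => e; have -> : a != b by apply/eqP => ab; apply: ng; rewrite -e ab mulgV.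
by rewrite ?andbT.
Qed.

Lemma sum_ind s (D : 'I_s -> {set gT}) x : pairwise_disjoint D ->
  (\sum_(i < s) (x \in D i))%N = (x \in \bigcup_(i < s) D i).
Proof.
move=> hd; case: (boolP (x \in \bigcup_(i < s) D i)) => [/bigcupP [i _ xi] | nx].
  rewrite (bigD1 i) //= xi big1 // => j ji.
  by rewrite (disjointFr (hd i j _) xi) // eq_sym.
rewrite big1 // => j _; case: (boolP (x \in D j)) => // xj; case/negP: nx.
by apply/bigcupP; exists j.
Qed.

Lemma sumT s (D : 'I_s -> {set gT}) g : pairwise_disjoint D ->
  (\sum_(i < s) \sum_(j < s) delta2_count (D i) (D j) g)%N =
  (\sum_(y : gT) ((y \in \bigcup_(i < s) D i) *
                  ((g * y)%g \in \bigcup_(i < s) D i)))%N.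
Proof.
move=> hd.
under eq_bigr => i _ do under eq_bigr => j _ do rewrite d2E.
rewrite (exchange_big_dep xpredT) //=.
under eq_bigr => j _ do rewrite exchange_big.
rewrite exchange_big; apply: eq_bigr => y _.
under eq_bigr => i _ do rewrite -big_distrr sum_ind //.
by rewrite -big_distrl sum_ind.
Qed.


Lemma countGH (G H : {group gT}) g : H \subset G -> g \in G ->
  (\sum_(y : gT) ((y \in G :\: H) * ((g * y)%g \in G :\: H)) + 2 * #|H| =
   #|G| + (g \in H) * #|H|)%N.
Proof.
move=> sHG gG.
pose P := (mulg g) @^-1: (H : {set gT}).
have hX : (\sum_(y : gT) ((y \in G :\: H) * ((g * y)%g \in G :\: H)))%N
          = #|G :\: (H :|: P)|.
  rewrite -sum1_card [RHS]big_mkcond; apply: eq_bigr => y _.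
  rewrite !inE mulnb (groupMl _ gG).
  by case: (y \in H); case: (g * y \in H)%g; case: (y \in G).
have sP : H :|: P \subset G.
  rewrite subUset sHG /=; apply/subsetP => y; rewrite inE => hy.
  by rewrite -(groupMl _ gG) (subsetP sHG).
have := cardsID (H :|: P) G; rewrite (setIidPr sP) => e1.
have := cardsUI H P; rewrite card_preimset; last exact: mulgI.
move=> e2.
have e3 : #|H :&: P| = ((g \in H) * #|H|)%N.
  case: (boolP (g \in H)) => gH.
    rewrite mul1n (setIidPl _) //; apply/subsetP => y hy.
    by rewrite inE groupM.
  rewrite mul0n; apply/eqP; rewrite cards_eq0; apply/eqP/setP => y.
  rewrite !inE; apply/negbTE; apply/negP => /andP [hy hgy].
  case/negP: gH; have -> : g = (g * y * y^-1)%g by rewrite mulgK.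
  by rewrite groupM // groupV.
lia.
Qed.

End Helpers.

Theorem mainTheorem7 (gT : finGroupType) (G H : {group gT})
    (m n k s lam : nat) (D : 'I_s -> {set gT}) :
  H \subset G -> #|G| = (m * n)%N -> #|H| = n ->
  (forall i, D i \subset G) -> (forall i, #|D i| = k) ->
  pairwise_disjoint D ->
  (forall i, is_RDS G H m n k lam (D i)) ->
  \bigcup_(i < s) D i = G :\: H ->
  is_DPDF G (m * n) k (s * lam)%:Z 0 D /\
  is_EPDF G (m * n) k ((m * n)%:Z - (2 * n)%:Z - (s * lam)%:Z)%R
          ((m * n)%:Z - n%:Z)%R D.
Proof.
move=> sHG hG hH sDG cD hd rds hU.
have h1 : (1 \in H)%g := group1 H.
have sD1 : forall i, D i \subset G :\ 1%g.
  move=> i; apply/subsetP => x xi.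
  have : x \in \bigcup_(i < s) D i by apply/bigcupP; exists i.
  rewrite hU !inE => /andP [xH ->]; rewrite andbT.
  by apply: contraNneq xH => ->.
have lamE : forall i g, g \in G :\: H -> delta_count (D i) g = lam.
  by move=> i g; have [_ [h _]] := rds i; apply: h.
have zE : forall i g, g \in H :\ 1%g -> delta_count (D i) g = 0%N.
  by move=> i g; have [_ [_ h]] := rds i; apply: h.
have hE : forall g, (ext_count D g + \sum_(i < s) delta2_count (D i) (D i) g)%N
    = (\sum_(i < s) \sum_(j < s) delta2_count (D i) (D j) g)%N.
  move=> g; rewrite /ext_count -big_split; apply: eq_bigr => i _.
  rewrite [RHS](bigD1 i) //= addnC; congr (_ + _); apply: eq_bigl => j; by rewrite eq_sym.
have unpack : forall g, g \in G :\: (\bigcup_(i < s) D i :|: [set 1%g]) ->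
    [/\ g \in H, g != 1%g & g \in G].
  move=> g; rewrite hU !inE.
  by case: (g \in H); case: (g \in G); case: (g == 1%g).
split.
  split; first by [].
  split.
    move=> g; rewrite hU => gS; rewrite /int_count.
    rewrite (eq_bigr (fun _ => lam)); last by move=> i _; apply: lamE.
    by rewrite sum_nat_const card_ord.
  move=> g /unpack [gH g1 gG].
  rewrite /int_count big1 // => i _; apply: zE; by rewrite !inE gH andbT.
split; first by [].
split.
  move=> g; rewrite hU => gS.
  have := hE g; rewrite sumT // hU.
  have := @countGH _ G H g sHG; move: (gS); rewrite inE => /andP [gH gG].
  move=> /(_ gG); rewrite (negbTE gH) mul0n addn0 => e1.
  rewrite (eq_bigr (fun _ => lam)); last first.
    move=> i _; rewrite dE lamE //; case: eqP => [g1|]; last by rewrite mul0n addn0.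
    by rewrite g1 group1 in gH.
  rewrite sum_nat_const card_ord => e2.
  rewrite hG hH in e1; have e3 : (ext_count D g + s * lam + 2 * n = m * n)%N by rewrite e2. lia.
move=> g /unpack [gH g1 gG].
have := hE g; rewrite sumT // hU.
have := @countGH _ G H g sHG gG; rewrite gH mul1n => e1.
rewrite big1; last first.
  move=> i _; rewrite dE zE ?inE ?gH ?g1 //.
  by rewrite (negbTE g1).
move=> e2.
rewrite hG hH in e1; have e3 : (ext_count D g + 0 + 2 * n = m * n + n)%N by rewrite e2. lia.
Qed.
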